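(* Let $\tau$ be a set of operation symbols and $X$ a set disjoint from $\tau$. Equip the set $T_\tau(X)$ of $\tau$-hyperterms over $X$ with the constants $\mathsf e_i^{\mathcal T}=\mathsf e_i$ ($i\ge 1$), $\sigma^{\mathcal T}=\sigma(\mathsf e_1,\mathsf e_2,\dots)$ ($\sigma\in\tau$), and operations $q_n^{\mathcal T}$ ($n\ge 0$) defined recursively by: $q_n^{\mathcal T}(\mathsf e_i,t_1,\dots,t_n)=t_i$ for $1\le i\le n$; $q_n^{\mathcal T}(\mathsf e_i,t_1,\dots,t_n)=\mathsf e_i$ for $i>n$; and for $w\in\tau\cup X$, $q_n^{\mathcal T}(w(t_1,\dots,t_k,\mathsf e_{k+1},\mathsf e_{k+2},\dots),\bar u)=w(q_n^{\mathcal T}(t_1,\bar u),\dots,q_n^{\mathcal T}(t_k,\bar u),q_n^{\mathcal T}(\mathsf e_{k+1},\bar u),q_n^{\mathcal T}(\mathsf e_{k+2},\bar u),\dots)$, where $\bar u=u_1,\dots,u_n$. Then $\mathcal T_\tau(X)=(T_\tau(X),q_n^{\mathcal T},\mathsf e_i^{\mathcal T},\sigma^{\mathcal T})$ is a clone $\tau$-algebra, and it is the free clone $\tau$-algebra over the set $X$ of generators (each $x\in X$ identified with $x(\mathsf e_1,\mathsf e_2,\dots)$) in the variety of all clone $\tau$-algebras: for every clone $\tau$-algebra $\mathcal C$ and every map $\alpha:X\to C$ there is a unique homomorphism $\mathcal T_\tau(X)\to\mathcal C$ extending $\alpha$. In particular, for $X=\emptyset$, $\mathcal T_\tau=\mathcal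 T_\tau(\emptyset)$ is initial in the class of clone $\tau$-algebras.
   Context: A clone $\tau$-algebra is an algebra $\mathcal C=(C,q_n^{\mathcal C},\mathsf e_i^{\mathcal C},\sigma^{\mathcal C})_{n\ge 0,i\ge1,\sigma\in\tau}$ where $\mathsf e_i^{\mathcal C},\sigma^{\mathcal C}\in C$ are constants and $q_n^{\mathcal C}$ is an $(n+1)$-ary operation, satisfying the identities: (C1) $q_n(\mathsf e_i,x_1,\dots,x_n)=x_i$ for $1\le i\le n$; (C2) $q_n(\mathsf e_j,x_1,\dots,x_n)=\mathsf e_j$ for $j>n$; (C3) $q_n(x,\mathsf e_1,\dots,\mathsf e_n)=x$; (C4) $q_n(x,y_1,\dots,y_n)=q_k(x,y_1,\dots,y_n,\mathsf e_{n+1},\dots,\mathsf e_k)$ for $k>n$; (C5) $q_n(q_n(x,y_1,\dots,y_n),z_1,\dots,z_n)=q_n(x,q_n(y_1,z_1,\dots,z_n),\dots,q_n(y_n,z_1,\dots,z_n))$. These form a variety. The set $T_\tau(X)$ of $\tau$-hyperterms over $X$ is the least set containing the symbols $\mathsf e_1,\mathsf e_2,\dots$ and containing the formal expression $w(t_1,\dots,t_n,\mathsf e_{n+1},\mathsf e_{n+2},\dots)$ whenever $w\in\tau\cup X$, $n\ge 0$ and $t_1,\dots,t_n\in T_\tau(X)$ (an infinite argument list which is eventually $\mathsf e_{k},\mathsf e_{k+1},\dots$ in positions $k$). *)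

(* Defs.v *)
From mathcomp Require Import all_boot.
Set Implicit Arguments. Unset Strict Implicit. Unset Printing Implicit Defensive.

(* Conventions: the constant e_{i+1} is written [e i] (0-based indices).
   The family (q_n)_{n>=0} is encoded by one operation [q x ys] where
   n = size ys, i.e. q x [:: y1; ...; yn] = q_n(x, y1, ..., yn). *)

Record clone_alg (tau : Type) := CloneAlg {
  ca_car :> Type;
  ca_q : ca_car -> seq ca_car -> ca_car;
  ca_e : nat -> ca_car;
  ca_sig : tau -> ca_car }.
Arguments ca_q {tau} c.
Arguments ca_e {tau} c.
Arguments ca_sig {tau} c.

Definition clone_axioms (tau : Type) (A : clone_alg tau) : Prop :=
  [/\ forall (i : nat) (xs : seq A), i < size xs ->
          ca_q A (ca_e A i) xs = nth (ca_e A i) xs i,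
      forall (i : nat) (xs : seq A), size xs <= i ->
          ca_q A (ca_e A i) xs = ca_e A i,
      forall (x : A) (n : nat), ca_q A x (mkseq (ca_e A) n) = x,
      forall (x : A) (ys : seq A) (m : nat),
          ca_q A x ys = ca_q A x (ys ++ map (ca_e A) (iota (size ys) m))
    & forall (x : A) (ys zs : seq A), size ys = size zs ->
          ca_q A (ca_q A x ys) zs = ca_q A x (map (fun y => ca_q A y zs) ys)].

Definition is_hom (tau : Type) (A B : clone_alg tau) (f : A -> B) : Prop :=
  [/\ forall (x : A) (ys : seq A), f (ca_q A x ys) = ca_q B (f x) (map f ys),
      forall i, f (ca_e A i) = ca_e B i
    & forall s, f (ca_sig A s) = ca_sig B s].

(* Raw hyperterms: [RE i] is e_{i+1}; [RApp w [:: t1; ..; tk]] is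
   w(t1,...,tk,e_{k+1},e_{k+2},...).  Distinct raw terms may denote the same
   formal expression (trailing e_j in position j); [canon] selects the
   canonical representative (no such trailing argument). *)
Inductive rterm (tau X : Type) :=
| RE of nat
| RApp of (tau + X) & seq (rterm tau X).
Arguments RE {tau X}.

Section Hyperterms.
Variables tau X : Type.
Local Notation rt := (rterm tau X).

Definition isE (t : rt) (j : nat) : bool :=
  if t is RE i then i == j else false.

Definition good_last (ts : seq rt) : bool :=
  match rev ts with [::] => true | t :: r => ~~ isE t (size r) end.

Fixpoint canon (t : rt) : bool :=
  match t with
  | RE _ => true
  | RApp _ ts => all canon ts && good_last ts
  end.

Fixpoint trim_rev (r : seq rt) : seq rt :=
  match r with
  | [::] => [::]
  | t :: r' => if isE t (size r') then trim_rev r' else r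
  end.

Definition trim (ts : seq rt) : seq rt := rev (trim_rev (rev ts)).

Fixpoint norm (t : rt) : rt :=
  match t with
  | RE i => RE i
  | RApp w ts => RApp w (trim (map norm ts))
  end.

Fixpoint qr (t : rt) (us : seq rt) : rt :=
  match t with
  | RE i => nth (RE i) us i
  | RApp w ts => RApp w (map (fun t' => qr t' us) ts ++ drop (size ts) us)
  end.

Lemma all_trim_rev (P : pred rt) (r : seq rt) : all P r -> all P (trim_rev r).
Proof.
elim: r => [|t r IH] //= /andP[Pt Pr].
by case: ifP => _; [apply: IH | rewrite /= Pt].
Qed.

Lemma good_trim (ts : seq rt) : good_last (trim ts).
Proof.
rewrite /good_last /trim revK.
elim: (rev ts) => [|t r IH] //=.
case: ifP => [_|Hn] //=.
by rewrite Hn.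
Qed.

Lemma all_trim (P : pred rt) (ts : seq rt) : all P ts -> all P (trim ts).
Proof. by move=> H; rewrite /trim all_rev; apply: all_trim_rev; rewrite all_rev. Qed.

Fixpoint canon_norm (t : rt) : canon (norm t).
Proof.
case: t => [i|w ts] //=.
rewrite good_trim andbT; apply: all_trim.
elim: ts => [|t ts IH] //=.
by rewrite canon_norm IH.
Qed.

Definition hterm := {t : rt | canon t}.

Definition hq (x : hterm) (ys : seq hterm) : hterm :=
  exist _ (norm (qr (sval x) (map sval ys))) (canon_norm _).

Definition he (i : nat) : hterm := exist _ (RE i) erefl.

Definition hsig (s : tau) : hterm := exist _ (RApp (inl s) [::]) erefl.

Definition hgen (x : X) : hterm := exist _ (RApp (inr x) [::]) erefl.

Definition HTerm : clone_alg tau := @CloneAlg tau hterm hq he hsig.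

End Hyperterms.

(* Main.v *)
Require Import Defs.
From mathcomp Require Import all_boot.
Set Implicit Arguments. Unset Strict Implicit. Unset Printing Implicit Defensive.

Section Raw.
Variables tau X : Type.
Local Notation rt := (rterm tau X).
Local Notation norm := (@norm tau X).
Local Notation qr := (@qr tau X).
Local Notation trim := (@trim tau X).

Local Notation isE := (@isE tau X).
Local Notation good_last := (@good_last tau X).
Definition ext (s : seq rt) p := nth (RE p) s p.

Section Ind.
Variable P : rt -> Prop.
Hypothesis HE : forall i, P (RE i).
Hypothesis HA : forall w ts, (forall p, P (ext ts p)) -> P (RApp w ts).
Fixpoint rt_ind' (t : rt) : P t :=
  match t with
  | RE i => HE i
  | RApp w ts => @HA w ts (fun p =>
      (fix G (s : seq rt) : forall d p, P d -> P (nth d s p) :=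
         match s return forall d p, P d -> P (nth d s p) with
         | [::] => fun d p Hd => match p return P (nth d [::] p) with 0 => Hd | _.+1 => Hd end
         | x :: s' => fun d p Hd => match p return P (nth d (x :: s') p) with
                       | 0 => rt_ind' x | p'.+1 => G s' d p' Hd end
         end) ts (RE p) p (HE p))
  end.
End Ind.

Lemma trim_nil : trim [::] = [::]. Proof. by []. Qed.

Lemma trim_rcons s t : trim (rcons s t) = if isE t (size s) then trim s else rcons s t.
Proof. by rewrite /trim rev_rcons /= size_rev; case: ifP => //; rewrite rev_cons revK. Qed.

Lemma good_rcons s t : good_last (rcons s t) = ~~ isE t (size s).
Proof. by rewrite /good_last rev_rcons size_rev. Qed.

Lemma ext_trim s p : ext (trim s) p = ext s p.
Proof.
elim/last_ind: s => [//|s t IH].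
rewrite trim_rcons; case: ifP => [|_ //].
rewrite IH /ext nth_rcons; case: t => // i /= /eqP ->.
case: ifP => // Hp; rewrite nth_default; last by rewrite leqNgt Hp.
by case: ifP => // /eqP ->.
Qed.

Lemma good_ext_inj s1 s2 : good_last s1 -> good_last s2 ->
  (forall p, ext s1 p = ext s2 p) -> s1 = s2.
Proof.
have H : forall a b, good_last b -> (forall p, ext a p = ext b p) -> size b <= size a.
  move=> a b gb E; rewrite leqNgt; apply/negP => Hlt.
  case/lastP: b gb E Hlt => [//|b t] gb E; rewrite size_rcons ltnS => Hab.
  have := E (size b); rewrite /ext nth_rcons ltnn eqxx nth_default // => Et.
  by move: gb; rewrite good_rcons -Et /= eqxx.
move=> g1 g2 E.
have Hs : size s1 = size s2 by apply/eqP; rewrite eqn_leq !H // => p; rewrite E.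
apply: (eq_from_nth (x0 := RE 0)) => // i Hi.
rewrite (set_nth_default (RE i)) // [RHS](set_nth_default (RE i)) -?Hs //.
exact: E.
Qed.

Lemma ext_map_norm s p : ext (map norm s) p = norm (ext s p).
Proof.
rewrite /ext; case: (ltnP p (size s)) => Hp; first by rewrite (nth_map (RE p)).
by rewrite !nth_default ?size_map.
Qed.

Lemma norm_app_eq w s1 s2 : (forall p, norm (ext s1 p) = norm (ext s2 p)) ->
  norm (RApp w s1) = norm (RApp w s2).
Proof.
move=> E /=; congr RApp; apply: good_ext_inj; rewrite ?good_trim // => p.
by rewrite !ext_trim !ext_map_norm.
Qed.

Lemma norm_idem t : norm (norm t) = norm t.
Proof.
elim/rt_ind': t => [//|w ts IH].
change (norm (RApp w (trim (map norm ts))) = norm (RApp w ts)).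
by apply: norm_app_eq => p; rewrite ext_trim ext_map_norm IH.
Qed.

Lemma ext_all (P : pred rt) s p : all P s -> P (RE p) -> P (ext s p).
Proof.
move=> /all_nthP H HE; rewrite /ext; case: (ltnP p (size s)) => Hp; first exact: H.
by rewrite nth_default.
Qed.

Lemma canon_norm_id t : canon t -> norm t = t.
Proof.
elim/rt_ind': t => [//|w ts IH] /= /andP[Ca Gl]; congr RApp.
apply: good_ext_inj; rewrite ?good_trim // => p.
by rewrite ext_trim ext_map_norm IH //; apply: ext_all.
Qed.

Lemma ext_qr (L us : seq rt) p :
  ext (map (fun t => qr t us) L ++ drop (size L) us) p = qr (ext L p) us.
Proof.
rewrite /ext nth_cat size_map; case: ltnP => Hp; first by rewrite (nth_map (RE p)).
by rewrite nth_drop subnKC // [nth _ L _]nth_default.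
Qed.

Lemma qr_app w ts us : qr (RApp w ts) us = RApp w (map (fun t => qr t us) ts ++ drop (size ts) us).
Proof. by []. Qed.

Lemma norm_qr_normr t us : norm (qr t (map norm us)) = norm (qr t us).
Proof.
elim/rt_ind': t => [i|w ts IH].
  rewrite /=; case: (ltnP i (size us)) => Hi; first by rewrite (nth_map (RE i)) // norm_idem.
  by rewrite !nth_default ?size_map.
by rewrite !qr_app; apply: norm_app_eq => p; rewrite !ext_qr.
Qed.

Lemma norm_qr_norml t us : norm (qr (norm t) us) = norm (qr t us).
Proof.
elim/rt_ind': t => [//|w ts IH].
change (norm (qr (RApp w (trim (map norm ts))) us) = norm (qr (RApp w ts) us)).
by rewrite !qr_app; apply: norm_app_eq => p; rewrite !ext_qr ext_trim ext_map_norm IH.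
Qed.

Lemma norm_qr_qr t ys zs : size ys = size zs ->
  norm (qr (qr t ys) zs) = norm (qr t (map (fun y => qr y zs) ys)).
Proof.
move=> Hs; elim/rt_ind': t => [i|w ts IH].
  rewrite /=; case: (ltnP i (size ys)) => Hi; first by rewrite (nth_map (RE i)).
  by rewrite nth_default //= !nth_default ?size_map -?Hs. 
by rewrite !qr_app; apply: norm_app_eq => p; rewrite !ext_qr IH.
Qed.

Lemma norm_qr_pad t ys m :
  norm (qr t (ys ++ map RE (iota (size ys) m))) = norm (qr t ys).
Proof.
elim/rt_ind': t => [i|w ts IH]; last first.
  by rewrite !qr_app; apply: norm_app_eq => p; rewrite !ext_qr.
rewrite /= nth_cat; case: ltnP => // Hi.
rewrite [nth _ ys _]nth_default //; case: (ltnP (i - size ys) m) => Hm.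
  by rewrite (nth_map 0) ?size_iota // nth_iota // subnKC.
by rewrite nth_default // size_map size_iota.
Qed.

Lemma norm_qr_id t n : norm (qr t (mkseq RE n)) = norm t.
Proof.
elim/rt_ind': t => [i|w ts IH]; last first.
  rewrite qr_app; apply: norm_app_eq => p; rewrite ext_qr IH.
  by rewrite /ext; case: (ltnP p (size ts)) => // Hp; rewrite nth_default.
rewrite /=; case: (ltnP i n) => Hi; first by rewrite nth_mkseq.
by rewrite nth_default // size_mkseq.
Qed.

End Raw.
Section HT.
Variables tau X : Type.
Local Notation HT := (HTerm tau X).

Lemma ht_eq (a b : hterm tau X) : sval a = sval b -> a = b.
Proof.
case: a b => [a ca] [b cb] /= E; subst b; congr exist; exact: bool_irrelevance.
Qed.

Lemma sval_canon (a : hterm tau X) : norm (sval a) = sval a.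
Proof. by apply: canon_norm_id; case: a. Qed.

Lemma HT_axioms : clone_axioms HT.
Proof.
split.
- move=> i xs Hi; apply: ht_eq => /=.
  by rewrite (nth_map (he tau X i)) // sval_canon.
- move=> i xs Hi; apply: ht_eq => /=.
  by rewrite nth_default ?size_map.
- move=> x n; apply: ht_eq => /=.
  have -> : map sval (mkseq (he tau X) n) = mkseq RE n by rewrite /mkseq -map_comp.
  by rewrite norm_qr_id sval_canon.
- move=> x ys m; apply: ht_eq => /=.
  rewrite map_cat -map_comp.
  have -> : [seq (sval \o he tau X) i | i <- iota (size ys) m] = map RE (iota (size (map sval ys)) m)
    by rewrite size_map.
  by rewrite norm_qr_pad.
- move=> x ys zs Hs; apply: ht_eq => /=.
  rewrite norm_qr_norml norm_qr_qr ?size_map // -map_comp.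
  rewrite -map_comp -norm_qr_normr -map_comp; congr (norm (qr _ _)); exact: eq_map.
Qed.
End HT.

Section Univ.
Variables (tau X : Type) (C : clone_alg tau) (CA : clone_axioms C) (alpha : X -> C).
Local Notation rt := (rterm tau X).
Local Notation q := (ca_q C).
Local Notation e := (ca_e C).

Definition hdw (w : tau + X) : C := match w with inl s => ca_sig C s | inr x => alpha x end.
Fixpoint ev (t : rt) : C :=
  match t with RE i => e i | RApp w ts => q (hdw w) (map ev ts) end.
Definition cext (s : seq C) p := nth (e p) s p.

Lemma C1 : forall (i : nat) (xs : seq C), i < size xs -> q (e i) xs = nth (e i) xs i.
Proof. by case: CA. Qed.
Lemma C2 : forall (i : nat) (xs : seq C), size xs <= i -> q (e i) xs = e i.
Proof. by case: CA. Qed.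
Lemma C3 : forall (x : C) (n : nat), q x (mkseq e n) = x.
Proof. by case: CA. Qed.
Lemma C4 : forall (x : C) (ys : seq C) (m : nat), q x ys = q x (ys ++ map e (iota (size ys) m)).
Proof. by case: CA. Qed.
Lemma C5 : forall (x : C) (ys zs : seq C), size ys = size zs ->
          q (q x ys) zs = q x (map (fun y => q y zs) ys).
Proof. by case: CA. Qed.

Lemma cext_pad s m p : cext (s ++ map e (iota (size s) m)) p = cext s p.
Proof.
rewrite /cext nth_cat; case: ltnP => // Hi.
rewrite [nth _ s _]nth_default //; case: (ltnP (p - size s) m) => Hm.
  by rewrite (nth_map 0) ?size_iota // nth_iota // subnKC.
by rewrite nth_default // size_map size_iota.
Qed.

Lemma size_pad (s : seq C) N : size s <= N -> size (s ++ map e (iota (size s) (N - size s))) = N.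
Proof. by move=> H; rewrite size_cat size_map size_iota subnKC. Qed.

Lemma Q_ext a s1 s2 : (forall p, cext s1 p = cext s2 p) -> q a s1 = q a s2.
Proof.
move=> E; set N := size s1 + size s2.
rewrite (C4 a s1 (N - size s1)) (C4 a s2 (N - size s2)); congr (q a _).
apply: (eq_from_nth (x0 := e 0)); first by rewrite !size_pad // /N ?leq_addr ?leq_addl.
move=> i Hi; have Hi2 : i < size (s2 ++ map e (iota (size s2) (N - size s2))).
  by move: Hi; rewrite !size_pad // /N ?leq_addl ?leq_addr.
rewrite (set_nth_default (e i) _ Hi) (set_nth_default (e i) _ Hi2).
by move: (cext_pad s1 (N - size s1) i) (cext_pad s2 (N - size s2) i); rewrite E /cext => -> ->.
Qed.


Lemma cext_map_ev L p : cext (map ev L) p = ev (ext L p).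
Proof.
rewrite /cext /ext; case: (ltnP p (size L)) => Hp; first by rewrite (nth_map (RE p)).
by rewrite !nth_default ?size_map.
Qed.

Lemma ev_norm t : ev (norm t) = ev t.
Proof.
elim/rt_ind': t => [//|w ts IH] /=.
by apply: Q_ext => p; rewrite !cext_map_ev ext_trim ext_map_norm IH.
Qed.

Lemma ev_qr_RE i us : ev (qr (RE i) us) = q (e i) (map ev us).
Proof.
rewrite /=; case: (ltnP i (size us)) => Hi.
  by rewrite C1 ?size_map // (nth_map (RE i)).
by rewrite C2 ?size_map // nth_default.
Qed.

Lemma ev_qr t us : ev (qr t us) = q (ev t) (map ev us).
Proof.
elim/rt_ind': t => [i|w ts IH]; first exact: ev_qr_RE.
rewrite qr_app [ev (RApp w ts)]/= [ev (RApp _ _)]/=.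
set T := map ev ts; set U := map ev us; set N := size T + size U.
rewrite [q (q _ _) _](C4 _ U (N - size U)) [q (hdw w) T](C4 _ T (N - size T)).
rewrite C5; last by rewrite !size_pad // /N ?leq_addl ?leq_addr.
apply: Q_ext => p; rewrite cext_map_ev ext_qr.
case: (ltnP p N) => Hp.
  rewrite /cext (nth_map (e p)); last by rewrite size_pad // /N leq_addr.
  rewrite -/(cext _ p) cext_pad cext_map_ev -C4; exact: IH.
rewrite /cext nth_default; last by rewrite size_map size_pad // /N leq_addr.
have Hts : size ts <= p by apply: leq_trans Hp; rewrite /N /T size_map leq_addr.
rewrite /ext nth_default // ev_qr_RE C2 // size_map.
by apply: leq_trans Hp; rewrite /N /U size_map leq_addl.
Qed.

Definition hev (t : HTerm tau X) : C := ev (sval t).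

Lemma ev_app0 w : ev (RApp w [::]) = hdw w.
Proof. exact: (C3 (hdw w) 0). Qed.

Lemma hev_hom : is_hom hev.
Proof.
split.
- by move=> x ys; rewrite /hev /= ev_norm ev_qr -map_comp.
- by [].
- by move=> s; exact: (ev_app0 (inl s)).
Qed.

Lemma hev_gen x : hev (hgen tau x) = alpha x.
Proof. exact: (ev_app0 (inr x)). Qed.

Lemma hev_uniq (h' : HTerm tau X -> C) : is_hom h' ->
  (forall x, h' (hgen tau x) = alpha x) -> forall t, h' t = hev t.
Proof.
case=> Hq He Hs Hg.
suff H : forall t (c : canon t), h' (exist _ t c) = ev t by case=> t c; apply: H.
elim/rt_ind' => [i|w ts IH] c.
  by rewrite /= -He; congr h'; apply: ht_eq.
have /andP[Ca _] := c.
have Hmap : map sval (pmap insub ts : seq (hterm tau X)) = ts.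
  elim: ts {IH c} Ca => //= t ts' IHs /andP[ct cts].
  by rewrite (insubT (fun t => canon t) ct) /= IHs.
set tsH := pmap insub ts : seq (hterm tau X).
pose hw := match w with inl s => @hsig tau X s | inr x => hgen tau x end.
have -> : exist _ (RApp w ts) c = hq hw tsH.
  apply: ht_eq; rewrite /= Hmap.
  by case: w @hw c => [s|x] hw c; rewrite -{1}(canon_norm_id c) /= drop0.
rewrite Hq /=; have -> : h' hw = hdw w by case: w @hw {c} => [s|x] /=; rewrite ?Hs ?Hg.
congr (q _ _).
have Hsz : size tsH = size ts by rewrite -Hmap size_map.
apply: (eq_from_nth (x0 := e 0)); first by rewrite !size_map.
move=> i; rewrite size_map => Hi.
rewrite (nth_map (he tau X i)) // (nth_map (RE i)) -?Hsz //.
have Ci : canon (ext ts i) by apply: ext_all.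
rewrite (_ : nth (he tau X i) tsH i = exist _ (ext ts i) Ci); first exact: IH.
by apply: ht_eq; rewrite /= /ext -Hmap (nth_map (he tau X i)).
Qed.
End Univ.

Unset Implicit Arguments.
Theorem mainTheorem1 (tau X : Type) :
  clone_axioms (HTerm tau X) /\
  (forall (C : clone_alg tau), clone_axioms C ->
     forall alpha : X -> C,
       exists h : HTerm tau X -> C,
         [/\ is_hom h,
             (forall x, h (hgen tau x) = alpha x) &
             (forall h' : HTerm tau X -> C, is_hom h' ->
                (forall x, h' (hgen tau x) = alpha x) -> forall t, h' t = h t)]) /\
  (forall (C : clone_alg tau), clone_axioms C ->
       exists h : HTerm tau void -> C,
         is_hom h /\ (forall h' : HTerm tau void -> C, is_hom h' -> forall t, h' t = h t)).
Proof.
split; first exact: HT_axioms.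
split.
  move=> C CA alpha; exists (@hev tau _ C alpha); split.
  - exact: hev_hom.
  - exact: hev_gen.
  - exact: hev_uniq.
move=> C CA; pose alpha := (fun v : void => match v return C with end).
exists (@hev tau void C alpha); split; first exact: hev_hom.
by move=> h' Hh'; apply: hev_uniq => // [[]].
Qed.
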